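(* Let $G$ be a knot grid diagram and $K$ the oriented planar knot diagram it determines. Then $$M(\mathbf x^+(G))=-\mathrm{writhe}(K)-\#\{\text{downward-oriented cusps}\}+1,\qquad M(\mathbf x^-(G))=-\mathrm{writhe}(K)-\#\{\text{upward-oriented cusps}\}+1,$$ where the cusps are those of the front projection of the associated Legendrian knot $\vec{\mathcal K}(G)$.
   Context: A grid diagram $G$ of grid number $n$ is an $n\times n$ array of unit squares in the plane with lower-left corner at the origin, some marked $X$ and some $O$, with exactly one $X$ and one $O$ (in different squares) in every row and column. Drawing horizontal segments from $O$ to $X$ in each row and vertical segments from $X$ to $O$ in each column, vertical over horizontal at crossings, gives an oriented planar diagram $K$; $G$ is a knot grid diagram if $K$ is a knot. $\mathrm{writhe}(K)$ is the number of positive minus the number of negative crossings of $K$. The oriented Legendrian knot $\vec{\mathcal K}(G)$ has front projection obtained from $K$ by smoothing northwest and southeast corners, turning southwest and northeast corners into cusps, and rotating $45^\circ$ clockwise; a cusp is downward- (resp. upward-) oriented if the front is traversed downward (resp. upward) through it. Write $\mathbb O$ for the set of centers of the $O$-squares. $\mathbf S(G)$ is the set of $n$-tuples of integer points in $[0,n)^2$ with exactly one point on each line $y=k$ and each line $x=k$, $0\le k<n$. For finite sets $A,B$ let $\mathcal I(A,B)=\#\{(a,b)\in A\times B:a_1<b_1,a_2<b_2\}$, $\mathcal J(A,B)=\frac12(\mathcal I(A,B)+\mathcal I(B,A))$, extended bilinearly; $M(\mathbf x)=\mathcal J(\mathbf x-\mathbb O,\mathbf x-\mathbb O)+1$ (independent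 of the choice of fundamental domain for the torus). $\mathbf x^+(G)$ (resp. $\mathbf x^-(G)$) is the generator whose points are the upper right (resp. lower left) corners of the squares marked $X$. *)

(* Defs.v *)
From mathcomp Require Import all_boot all_order all_fingroup all_algebra.
Set Implicit Arguments. Unset Strict Implicit. Unset Printing Implicit Defensive.
Import Order.TTheory GRing.Theory Num.Theory.

(* A grid diagram of grid number n is encoded by two permutations of 'I_n:
   in column i (i.e. the squares [i,i+1] x [*]) the X is in row gX i and the
   O is in row gO i.  "Exactly one X (resp. O) in every row and column" is
   exactly the statement that gX and gO are permutations.  The square of the
   X in column i is [i,i+1] x [gX i, gX i + 1]. *)

Section Grid.
Variables (n : nat) (gX gO : {perm 'I_n}).

Definition colX (j : 'I_n) : 'I_n := (gX^-1)%g j.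
Definition colO (j : 'I_n) : 'I_n := (gO^-1)%g j.

(* Following K: from the X of column i go vertically to the O of column i
   (row gO i), then horizontally to the X of that row, in column
   colX (gO i). *)
Definition next_col : {perm 'I_n} := (gO * gX^-1)%g.

(* G is a grid diagram (X and O in different squares) and K is a knot,
   i.e. the single-component condition: next_col is one cycle. *)
Definition knot_grid : Prop :=
  (forall i : 'I_n, gX i != gO i) /\
  (forall i j : 'I_n, exists k : nat, ((next_col ^+ k)%g i) = j).

Definition strictly_between (a b c : nat) : bool :=
  (minn a b < c < maxn a b)%N.

(* vertical segment of column i crosses horizontal segment of row j *)
Definition crossing (i j : 'I_n) : bool :=
  strictly_between (colO j) (colX j) i && strictly_between (gX i) (gO i) j.

(* vertical strand (X -> O) goes up; horizontal strand (O -> X) goes right *)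
Definition vert_up (i : 'I_n) : bool := (gX i < gO i)%N.
Definition horiz_right (j : 'I_n) : bool := (colO j < colX j)%N.

(* Vertical is over horizontal.  The crossing is positive (right-handed) iff
   det(over direction, under direction) > 0, i.e. iff exactly one of
   "vertical goes up", "horizontal goes right" holds. *)
Definition crossing_positive (i j : 'I_n) : bool := vert_up i != horiz_right j.

Definition writhe : int :=
  (\sum_(i : 'I_n) \sum_(j : 'I_n)
     (if crossing i j then (if crossing_positive i j then 1 else -1) else 0))%R.

(* Corners of K: one at every marking.  At the X of column c the vertical
   segment leaves towards gO c and the horizontal one comes from colO (gX c);
   at the O of column c the vertical arrives from gX c and the horizontal
   leaves towards colX (gO c).
   A corner is southwest if its two edges go north and east from it,
   northeast if they go south and west. *)
Definition X_vert_up (c : 'I_n) : bool := (gX c < gO c)%N.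
Definition X_horiz_right (c : 'I_n) : bool := (c < colO (gX c))%N.
Definition O_vert_up (c : 'I_n) : bool := (gO c < gX c)%N.
Definition O_horiz_right (c : 'I_n) : bool := (c < colX (gO c))%N.

Definition X_SW c := X_vert_up c && X_horiz_right c.
Definition X_NE c := ~~ X_vert_up c && ~~ X_horiz_right c.
Definition O_SW c := O_vert_up c && O_horiz_right c.
Definition O_NE c := ~~ O_vert_up c && ~~ O_horiz_right c.

(* After rotating 45 degrees clockwise, the front's upward direction is the
   original northwest direction.  The orientation goes X -> O vertically and
   O -> X horizontally, so: an SW corner at an O is traversed from the north
   edge to the east edge (downward), at an X from east to north (upward);
   an NE corner at an X is traversed from the west edge to the south edge
   (downward), at an O from south to west (upward). *)
Definition down_cusps : nat := #|[pred c : 'I_n | O_SW c]| + #|[pred c : 'I_n | X_NE c]|.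
Definition up_cusps : nat := #|[pred c : 'I_n | X_SW c]| + #|[pred c : 'I_n | O_NE c]|.

Local Open Scope ring_scope.

Definition point := (rat * rat)%type.

Definition Ocenters : seq point :=
  [seq (((nat_of_ord i)%:R + 1/2), ((nat_of_ord (gO i))%:R + 1/2)) | i : 'I_n <- enum 'I_n].

(* x^+: upper right corners of the X squares, reduced to [0,n)^2 (torus) *)
Definition xplus : seq point :=
  [seq ((((nat_of_ord i).+1 %% n)%N%:R), (((nat_of_ord (gX i)).+1 %% n)%N%:R)) | i : 'I_n <- enum 'I_n].

Definition xminus : seq point :=
  [seq ((nat_of_ord i)%:R, (nat_of_ord (gX i))%:R) | i : 'I_n <- enum 'I_n].

End Grid.

Local Open Scope ring_scope.

Definition Irel (A B : seq point) : nat :=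
  (\sum_(a <- A) count (fun b : point => ((a.1 < b.1)%R && (a.2 < b.2)%R)) B)%N.

Definition Jrel (A B : seq point) : rat := ((Irel A B + Irel B A)%N%:R) / 2.

(* M(x) = J(x - O, x - O) + 1, expanded bilinearly. *)
Definition Mgr (O x : seq point) : rat :=
  Jrel x x - Jrel x O - Jrel O x + Jrel O O + 1.

(* Main.v *)
Require Import Defs.
From mathcomp Require Import all_boot all_order all_fingroup all_algebra zify ring lra.
Import GRing.Theory Num.Theory.
Local Open Scope ring_scope.
Set Implicit Arguments. Unset Strict Implicit.
Notation "[[ b ]]" := ((nat_of_bool b)%:Z).

Section S.
Variable n : nat.

Definition S2 (F : 'I_n -> 'I_n -> int) : int := \sum_(c : 'I_n) \sum_(k : 'I_n) F c k.

Lemma S2D F G : S2 (fun c k => F c k + G c k) = S2 F + S2 G.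
Proof. rewrite /S2 -big_split /=; apply: eq_bigr => c _; by rewrite big_split. Qed.
Lemma S2N F : S2 (fun c k => - F c k) = - S2 F.
Proof. rewrite /S2 -sumrN; apply: eq_bigr => c _; by rewrite sumrN. Qed.
Lemma eq_S2 F G : (forall c k, F c k = G c k) -> S2 F = S2 G.
Proof. move=> h; rewrite /S2; apply: eq_bigr => c _; apply: eq_bigr => k _; exact: h. Qed.
Lemma S2_swap F : S2 F = S2 (fun c k => F k c).
Proof. by rewrite /S2 exchange_big. Qed.
Lemma S2_inj (p q : 'I_n -> 'I_n) G : injective p -> injective q ->
  S2 (fun c k => G (p c) (q k)) = S2 G.
Proof.
move=> ip iq; rewrite /S2 [RHS](reindex_inj ip); apply: eq_bigr => c _.
by rewrite [RHS](reindex_inj iq).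
Qed.
Lemma sum_inj (p : 'I_n -> 'I_n) (f : 'I_n -> int) : injective p ->
  \sum_c f (p c) = \sum_c f c.
Proof. by move=> ip; rewrite [RHS](reindex_inj ip). Qed.
Lemma sum_pick (v : 'I_n) (f : 'I_n -> int) : \sum_k [[k == v]] * f k = f v.
Proof.
rewrite (bigD1 v) //= eqxx mul1r big1 ?addr0 // => k /negbTE ->; by rewrite mul0r.
Qed.
Lemma sum_pick1 (v : 'I_n) : \sum_k [[k == v]] = 1.
Proof. rewrite -[RHS](sum_pick v (fun _ => 1)); apply: eq_bigr => k _; by rewrite mulr1. Qed.
Lemma sum_pick_perm (p : {perm 'I_n}) (v : 'I_n) (f : 'I_n -> int) :
  \sum_k [[p k == v]] * f k = f ((p^-1)%g v).
Proof.
rewrite -(sum_pick ((p^-1)%g v)); apply: eq_bigr => k _.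
congr (_%:Z * _); congr (nat_of_bool _).
apply/eqP/eqP => [<-|->]; by rewrite ?permK ?permKV.
Qed.
Lemma S2_diag F : S2 (fun c k => [[c == k]] * F c k) = \sum_c F c c.
Proof.
rewrite /S2; apply: eq_bigr => c _.
rewrite -[RHS](sum_pick c (F c)); apply: eq_bigr => k _; by rewrite eq_sym.
Qed.
Lemma sum_cst_int (x : int) : \sum_(c : 'I_n) x = x *+ n.
Proof. by rewrite sumr_const card_ord. Qed.
End S.
Lemma Irel_map n (f g : 'I_n -> point) :
  (Irel [seq f i | i <- enum 'I_n] [seq g k | k <- enum 'I_n])%:Z =
  S2 (fun c k => [[((f c).1 < (g k).1) && ((f c).2 < (g k).2)]]).
Proof.
rewrite /Irel big_map big_enum /= -natz natr_sum /S2; apply: eq_bigr => c _.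
rewrite count_map -sum1_count big_mkcond big_enum /= natr_sum.
apply: eq_bigr => k _ /=. by case: ifP.
Qed.
Lemma card_sum n (P : pred 'I_n) : (#|P|)%:Z = \sum_c [[P c]].
Proof.
rewrite -sum1_card -natz natr_sum big_mkcond /=; apply: eq_bigr => c _; by rewrite -topredE /=; case: (P c).
Qed.

Lemma lt_nat_half (x y : nat) : ((x%:R : rat) < y%:R + 1/2) = (x <= y)%N.
Proof.
apply/idP/idP => H.
- rewrite leqNgt; apply/negP => h.
  have : ((y.+1)%:R : rat) <= x%:R by rewrite ler_nat.
  rewrite -addn1 natrD; lra.
- have : ((x)%:R : rat) <= y%:R by rewrite ler_nat.
  lra.
Qed.
Lemma lt_half_nat (x y : nat) : ((x%:R : rat) + 1/2 < y%:R) = (x < y)%N.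
Proof.
apply/idP/idP => H.
- rewrite ltnNge; apply/negP => h.
  have : ((y)%:R : rat) <= x%:R by rewrite ler_nat.
  lra.
- have : ((x.+1)%:R : rat) <= y%:R by rewrite ler_nat.
  rewrite -addn1 natrD; lra.
Qed.
Lemma lt_half_half (x y : nat) : ((x%:R : rat) + 1/2 < y%:R + 1/2) = (x < y)%N.
Proof. by rewrite ltrD2r ltr_nat. Qed.

Lemma Mgr_eq (O x : seq point) :
  Mgr O x = (((Irel x x)%:Z - (Irel x O)%:Z - (Irel O x)%:Z + (Irel O O)%:Z + 1)%:~R : rat).
Proof.
rewrite /Mgr /Jrel !rmorphD !rmorphN /=.
change (((Irel x x)%:Z)%:~R : rat) with ((Irel x x)%:R : rat).
change (((Irel x O)%:Z)%:~R : rat) with ((Irel x O)%:R : rat).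
change (((Irel O x)%:Z)%:~R : rat) with ((Irel O x)%:R : rat).
change (((Irel O O)%:Z)%:~R : rat) with ((Irel O O)%:R : rat).

by rewrite mulr1z; field.
Qed.

Lemma pw1 (x y i a b j : nat) : ((j==b) = (x==i)) -> ((j==a) = (y==i)) ->
  (if strictly_between x y i && strictly_between a b j then (if (a<b)%N != (x<y)%N then 1 else -1) else 0 : int)
  = - [[(x<i)%N && (a<j)%N]] + [[(x<i)%N && (b<j)%N]] + [[(y<i)%N && (a<j)%N]] - [[(y<i)%N && (b<j)%N]]
    - [[(j==b) && ((a<b)%N && (y<i)%N)]] - [[(j==a) && ((b<a)%N && (x<i)%N)]].
Proof.
rewrite /strictly_between => h1 h2.
case E1: (x<i)%N; case E2: (y<i)%N; case E3: (a<j)%N; case E4: (b<j)%N => /=;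
case: ifP => H1; try case: ifP => H2; lia.
Qed.

Lemma pw2 (x y i a b j : nat) : ((j==b) = (x==i)) -> ((j==a) = (y==i)) ->
  (if strictly_between x y i && strictly_between a b j then (if (a<b)%N != (x<y)%N then 1 else -1) else 0 : int)
  = - [[(x<=i)%N && (a<=j)%N]] + [[(x<=i)%N && (b<=j)%N]] + [[(y<=i)%N && (a<=j)%N]] - [[(y<=i)%N && (b<=j)%N]]
    - [[(j==b) && ((b<a)%N && (i<y)%N)]] - [[(j==a) && ((a<b)%N && (i<x)%N)]].
Proof.
rewrite /strictly_between => h1 h2.
case E1: (x<=i)%N; case E2: (y<=i)%N; case E3: (a<=j)%N; case E4: (b<=j)%N => /=;
case: ifP => H1; try case: ifP => H2; lia.
Qed.

Lemma spp (c x y a b : nat) : ((a == b) = (x == c)) -> ((b == a) = (y == c)) ->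
  [[true]] - [[(x <= c)%N]] - [[(b <= a)%N]] - [[(b < a)%N && (c < y)%N]] - [[(a < b)%N && (c < x)%N]]
  + [[(b < a)%N && (c < y)%N]] + [[~~ (a < b)%N && ~~ (c < x)%N]] = 0.
Proof. move=> e1 e2; case: (ltngtP a b) => h; lia. Qed.

Section Main.
Variables (n : nat) (gX gO : {perm 'I_n}).
Local Notation cO := (colO gO).
Local Notation cX := (colX gX).

Lemma eqO (i j : 'I_n) : ((j : nat) == gO i) = ((cO j : nat) == i).
Proof. rewrite !val_eqE /colO; apply/eqP/eqP => [->|<-]; by rewrite ?permK ?permKV. Qed.
Lemma eqX (i j : 'I_n) : ((j : nat) == gX i) = ((cX j : nat) == i).
Proof. rewrite !val_eqE /colX; apply/eqP/eqP => [->|<-]; by rewrite ?permK ?permKV. Qed.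

Lemma reO (F : 'I_n -> 'I_n -> 'I_n -> int) :
  S2 (fun i j => F i (cO j) j) = S2 (fun i p => F i p (gO p)).
Proof.
rewrite /S2; apply: eq_bigr => i _.
rewrite -(sum_inj (fun j => F i (cO j) j) (@perm_inj _ gO)) /=.
apply: eq_bigr => p _; by rewrite /colO permK.
Qed.
Lemma reX (F : 'I_n -> 'I_n -> 'I_n -> int) :
  S2 (fun i j => F i (cX j) j) = S2 (fun i p => F i p (gX p)).
Proof.
rewrite /S2; apply: eq_bigr => i _.
rewrite -(sum_inj (fun j => F i (cX j) j) (@perm_inj _ gX)) /=.
apply: eq_bigr => p _; by rewrite /colX permK.
Qed.
Lemma pick_gen (g : 'I_n -> 'I_n) (P : 'I_n -> 'I_n -> bool) :
  S2 (fun i j => [[((j : nat) == g i) && P i j]]) = \sum_i [[P i (g i)]].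
Proof.
rewrite /S2; apply: eq_bigr => i _.
rewrite -[RHS](sum_pick (g i) (fun j => [[P i j]])); apply: eq_bigr => j _.
rewrite val_eqE; by case: (j == g i); case: (P i j).
Qed.

Lemma writhe_minus : writhe gX gO =
  - S2 (fun i p => [[(p < i)%N && (gX i < gO p)%N]])
  + S2 (fun i p => [[(p < i)%N && (gO i < gO p)%N]])
  + S2 (fun i q => [[(q < i)%N && (gX i < gX q)%N]])
  - S2 (fun i q => [[(q < i)%N && (gO i < gX q)%N]])
  - \sum_i [[(gX i < gO i)%N && (cX (gO i) < i)%N]]
  - \sum_i [[(gO i < gX i)%N && (cO (gX i) < i)%N]].
Proof.
transitivity (S2 (fun i j => - [[(cO j < i)%N && (gX i < j)%N]] + [[(cO j < i)%N && (gO i < j)%N]]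
   + [[(cX j < i)%N && (gX i < j)%N]] - [[(cX j < i)%N && (gO i < j)%N]]
   - [[((j:nat) == gO i) && ((gX i < gO i)%N && (cX j < i)%N)]]
   - [[((j:nat) == gX i) && ((gO i < gX i)%N && (cO j < i)%N)]])).
  apply: eq_S2 => i j.
  rewrite /crossing /crossing_positive /vert_up /horiz_right; apply: pw1.
  exact: eqO. exact: eqX.
rewrite !S2D !S2N.
rewrite (reO (fun i p j => [[(p < i)%N && (gX i < j)%N]])).
rewrite (reO (fun i p j => [[(p < i)%N && (gO i < j)%N]])).
rewrite (reX (fun i p j => [[(p < i)%N && (gX i < j)%N]])).
rewrite (reX (fun i p j => [[(p < i)%N && (gO i < j)%N]])).
rewrite (pick_gen gO (fun i j => (gX i < gO i)%N && (cX j < i)%N)).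
rewrite (pick_gen gX (fun i j => (gO i < gX i)%N && (cO j < i)%N)).
by [].
Qed.

Lemma T_perm (g : {perm 'I_n}) :
  S2 (fun c k => [[(c < k)%N && (g c < g k)%N]]) + S2 (fun c k => [[(k < c)%N && (g c < g k)%N]])
  = S2 (fun c k : 'I_n => [[(c < k)%N]]).
Proof.
rewrite -S2D.
rewrite -(@S2_inj _ g g (fun c k => [[(c < k)%N]]) (@perm_inj _ g) (@perm_inj _ g)).
apply: eq_S2 => c k /=.
have : ((c : nat) == k) = ((g c : nat) == g k) by rewrite !val_eqE (inj_eq (@perm_inj _ g)).
lia.
Qed.

Lemma T_swap : S2 (fun c k : 'I_n => [[(k < c)%N]]) = S2 (fun c k : 'I_n => [[(c < k)%N]]).
Proof. by rewrite S2_swap. Qed.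

Lemma xminus_int :
  S2 (fun c k => [[(c < k)%N && (gX c < gX k)%N]])
  - S2 (fun c k => [[(c <= k)%N && (gX c <= gO k)%N]])
  - S2 (fun c k => [[(c < k)%N && (gO c < gX k)%N]])
  + S2 (fun c k => [[(c < k)%N && (gO c < gO k)%N]])
  = - writhe gX gO - (up_cusps gX gO)%:Z.
Proof.
rewrite writhe_minus /up_cusps PoszD !card_sum.
set T := S2 (fun c k : 'I_n => [[(c < k)%N]]).
have R1 := T_perm gX. have R2 := T_perm gO. have R0 := T_swap.
have R3 : S2 (fun c k => [[(c <= k)%N && (gX c <= gO k)%N]])
   + S2 (fun i q => [[(q < i)%N && (gO i < gX q)%N]])
   = T + \sum_c [[(gX c <= gO c)%N]].
  rewrite [X in _ + X]S2_swap -S2D -(S2_diag (fun c k : 'I_n => [[(gX c <= gO k)%N]])) -S2D; apply: eq_S2 => c k /=.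
  case: (ltngtP c k) => h.
  - rewrite -val_eqE (ltn_eqF h) /=. lia.
  - rewrite -val_eqE (gtn_eqF h) /=. lia.
  - have -> : c = k by apply: val_inj. rewrite eqxx /=. lia.
have R4 : S2 (fun c k => [[(c < k)%N && (gO c < gX k)%N]])
   + S2 (fun i p => [[(p < i)%N && (gX i < gO p)%N]])
   + \sum_k [[(cO (gX k) < k)%N]] = T.
  have -> : \sum_k [[(cO (gX k) < k)%N]] = S2 (fun c k => [[(c < k)%N && ((gX k : nat) == gO c)]]).
    rewrite S2_swap /S2; apply: eq_bigr => k _.
    rewrite -(sum_pick_perm gO (gX k) (fun c => [[(c < k)%N]])); apply: eq_bigr => c _.
    by rewrite val_eqE eq_sym; case: (_ == _); case: (_ < _)%N.
  rewrite [X in _ + X + _]S2_swap -!S2D; apply: eq_S2 => c k /=. lia.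
have Hs : \sum_c [[(cO (gX c) < c)%N]] - \sum_c [[(gX c <= gO c)%N]]
   - \sum_i [[(gX i < gO i)%N && (cX (gO i) < i)%N]]
   - \sum_i [[(gO i < gX i)%N && (cO (gX i) < i)%N]]
   + \sum_c [[[pred c | X_SW gX gO c] c]] + \sum_c [[[pred c | O_NE gX gO c] c]] = 0.
  rewrite -!sumrB -!big_split /=; apply: big1 => c _.
  rewrite /X_SW /O_NE /X_vert_up /X_horiz_right /O_vert_up /O_horiz_right.
  have e1 := eqO c (gX c). have e2 := eqX c (gO c).
  lia.
lia.
Qed.

Lemma writhe_plus : writhe gX gO =
  - S2 (fun i p => [[(p <= i)%N && (gX i <= gO p)%N]])
  + S2 (fun i p => [[(p <= i)%N && (gO i <= gO p)%N]])
  + S2 (fun i q => [[(q <= i)%N && (gX i <= gX q)%N]])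
  - S2 (fun i q => [[(q <= i)%N && (gO i <= gX q)%N]])
  - \sum_i [[(gO i < gX i)%N && (i < cX (gO i))%N]]
  - \sum_i [[(gX i < gO i)%N && (i < cO (gX i))%N]].
Proof.
transitivity (S2 (fun i j => - [[(cO j <= i)%N && (gX i <= j)%N]] + [[(cO j <= i)%N && (gO i <= j)%N]]
   + [[(cX j <= i)%N && (gX i <= j)%N]] - [[(cX j <= i)%N && (gO i <= j)%N]]
   - [[((j:nat) == gO i) && ((gO i < gX i)%N && (i < cX j)%N)]]
   - [[((j:nat) == gX i) && ((gX i < gO i)%N && (i < cO j)%N)]])).
  apply: eq_S2 => i j.
  rewrite /crossing /crossing_positive /vert_up /horiz_right; apply: pw2.
  exact: eqO. exact: eqX.
rewrite !S2D !S2N.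
rewrite (reO (fun i p j => [[(p <= i)%N && (gX i <= j)%N]])).
rewrite (reO (fun i p j => [[(p <= i)%N && (gO i <= j)%N]])).
rewrite (reX (fun i p j => [[(p <= i)%N && (gX i <= j)%N]])).
rewrite (reX (fun i p j => [[(p <= i)%N && (gO i <= j)%N]])).
rewrite (pick_gen gO (fun i j => (gO i < gX i)%N && (i < cX j)%N)).
rewrite (pick_gen gX (fun i j => (gX i < gO i)%N && (i < cO j)%N)).
by [].
Qed.

Lemma le_perm (g : {perm 'I_n}) :
  S2 (fun i p => [[(p <= i)%N && (g i <= g p)%N]])
  = S2 (fun c k => [[(k < c)%N && (g c < g k)%N]]) + \sum_(c : 'I_n) [[true]].
Proof.
rewrite -(S2_diag (fun c k : 'I_n => [[true]])) -S2D; apply: eq_S2 => c k /=.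
have H : ((c : nat) == k) = ((g c : nat) == g k) by rewrite !val_eqE (inj_eq (@perm_inj _ g)).
have -> : (c == k) = ((c : nat) == k) by [].
lia.
Qed.

Lemma xplus_unwr_int :
  S2 (fun c k => [[(c < k)%N && (gX c < gX k)%N]])
  - S2 (fun c k => [[(c < k)%N && (gX c < gO k)%N]])
  - S2 (fun c k => [[(c <= k)%N && (gO c <= gX k)%N]])
  + S2 (fun c k => [[(c < k)%N && (gO c < gO k)%N]])
  = - writhe gX gO - (down_cusps gX gO)%:Z.
Proof.
rewrite writhe_plus /down_cusps PoszD !card_sum !le_perm.
set T := S2 (fun c k : 'I_n => [[(c < k)%N]]).
have R1 := T_perm gX. have R2 := T_perm gO. have R0 := T_swap.
have Rle : S2 (fun c k : 'I_n => [[(c <= k)%N]]) = T + \sum_(c : 'I_n) [[true]].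
  rewrite -(S2_diag (fun c k : 'I_n => [[true]])) -S2D; apply: eq_S2 => c k /=.
  have -> : (c == k) = ((c : nat) == k) by [].
  lia.
have R3 : S2 (fun c k => [[(c <= k)%N && (gO c <= gX k)%N]])
   + S2 (fun i p => [[(p <= i)%N && (gX i <= gO p)%N]])
   = T + \sum_(c : 'I_n) [[true]] + \sum_k [[(cO (gX k) <= k)%N]].
  have -> : \sum_k [[(cO (gX k) <= k)%N]] = S2 (fun c k => [[(c <= k)%N && ((gX k : nat) == gO c)]]).
    rewrite S2_swap /S2; apply: eq_bigr => k _.
    rewrite -(sum_pick_perm gO (gX k) (fun c => [[(c <= k)%N]])); apply: eq_bigr => c _.
    by rewrite val_eqE eq_sym; case: (_ == _); case: (_ <= _)%N.
  rewrite -Rle [X in _ + X = _]S2_swap -!S2D; apply: eq_S2 => c k /=. lia.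
have R4 : S2 (fun c k => [[(c < k)%N && (gX c < gO k)%N]])
   + S2 (fun i q => [[(q <= i)%N && (gO i <= gX q)%N]])
   = T + \sum_c [[(gO c <= gX c)%N]].
  rewrite [X in _ + X]S2_swap -S2D -(S2_diag (fun c k : 'I_n => [[(gO k <= gX c)%N]])) -S2D; apply: eq_S2 => c k /=.
  case: (ltngtP c k) => h.
  - rewrite -val_eqE (ltn_eqF h) /=. lia.
  - rewrite -val_eqE (gtn_eqF h) /=. lia.
  - have -> : c = k by apply: val_inj. rewrite eqxx /=. lia.
have Hs : \sum_(c : 'I_n) [[true]] - \sum_k [[(cO (gX k) <= k)%N]] - \sum_c [[(gO c <= gX c)%N]]
   - \sum_i [[(gO i < gX i)%N && (i < cX (gO i))%N]]
   - \sum_i [[(gX i < gO i)%N && (i < cO (gX i))%N]]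
   + \sum_c [[[pred c | O_SW gX gO c] c]] + \sum_c [[[pred c | X_NE gX gO c] c]] = 0.
  rewrite -!sumrB -!big_split /=; apply: big1 => c _.
  rewrite /X_NE /O_SW /X_vert_up /X_horiz_right /O_vert_up /O_horiz_right.
  have e1 := eqO c (gX c). have e2 := eqX c (gO c).
  exact: spp e1 e2.
lia.
Qed.
End Main.

Section Plus.
Variables (m : nat) (gX gO : {perm 'I_m.+1}).
Local Notation N := (@ord_max m).
Local Notation cX := (colX gX).

Lemma modS (x : nat) : (x <= m)%N -> (x.+1 %% m.+1 = if x == m then 0 else x.+1)%N.
Proof. move=> h; case: eqP => [->|ne]; first by rewrite modnn. rewrite modn_small //; lia. Qed.

Lemma P1 (c k : 'I_m.+1) :
  [[((c : nat).+1 %% m.+1 < (k : nat).+1 %% m.+1)%N && ((gX c : nat).+1 %% m.+1 < (gX k : nat).+1 %% m.+1)%N]]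
  = [[(c < k)%N && (gX c < gX k)%N]] + [[((c : nat) == m) && (gX c < gX k)%N]]
    - [[((k : nat) == m) && (gX c < gX k)%N]]
    + [[((gX c : nat) == m) && ((c : nat).+1 %% m.+1 < (k : nat).+1 %% m.+1)%N]]
    - [[((gX k : nat) == m) && ((c : nat).+1 %% m.+1 < (k : nat).+1 %% m.+1)%N]].
Proof.
have H : ((c : nat) == k) = ((gX c : nat) == gX k) by rewrite !val_eqE (inj_eq (@perm_inj _ gX)).
rewrite (modS (ltn_ord c)) (modS (ltn_ord k)) (modS (ltn_ord (gX c))) (modS (ltn_ord (gX k))).
have := ltn_ord c; have := ltn_ord k; have := ltn_ord (gX c); have := ltn_ord (gX k).
repeat (case: ifP => ?); lia.
Qed.

Lemma P2 (c k : 'I_m.+1) :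
  [[((c : nat).+1 %% m.+1 <= k)%N && ((gX c : nat).+1 %% m.+1 <= gO k)%N]]
  = [[(c < k)%N && (gX c < gO k)%N]] + [[((gX c : nat) == m) && (c < k)%N]]
    + [[((c : nat) == m) && (gX c < gO k)%N]] + [[((c : nat) == m) && ((gX c : nat) == m)]].
Proof.
rewrite (modS (ltn_ord c)) (modS (ltn_ord (gX c))).
have := ltn_ord c; have := ltn_ord k; have := ltn_ord (gX c); have := ltn_ord (gO k).
repeat (case: ifP => ?); lia.
Qed.

Lemma P3 (c k : 'I_m.+1) :
  [[(c < (k : nat).+1 %% m.+1)%N && (gO c < (gX k : nat).+1 %% m.+1)%N]]
  = [[(c <= k)%N && (gO c <= gX k)%N]] - [[((gX k : nat) == m) && (c <= k)%N]]
    - [[((k : nat) == m) && (gO c <= gX k)%N]] + [[((k : nat) == m) && ((gX k : nat) == m)]].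
Proof.
rewrite (modS (ltn_ord k)) (modS (ltn_ord (gX k))).
have := ltn_ord c; have := ltn_ord k; have := ltn_ord (gX k); have := ltn_ord (gO c).
repeat (case: ifP => ?); lia.
Qed.

Lemma cN1 (P : 'I_m.+1 -> 'I_m.+1 -> bool) :
  S2 (fun c k => [[((c : nat) == m) && P c k]]) = \sum_k [[P N k]].
Proof.
rewrite /S2 exchange_big; apply: eq_bigr => k _.
rewrite -(sum_pick N (fun c => [[P c k]])); apply: eq_bigr => c _.
have -> : ((c : nat) == m) = (c == N) by [].
by case: (c == N); case: (P c k).
Qed.
Lemma cN2 (P : 'I_m.+1 -> 'I_m.+1 -> bool) :
  S2 (fun c k => [[((k : nat) == m) && P c k]]) = \sum_c [[P c N]].
Proof.
rewrite /S2; apply: eq_bigr => c _.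
rewrite -(sum_pick N (fun k => [[P c k]])); apply: eq_bigr => k _.
have -> : ((k : nat) == m) = (k == N) by [].
by case: (k == N); case: (P c k).
Qed.
Lemma cX1 (P : 'I_m.+1 -> 'I_m.+1 -> bool) :
  S2 (fun c k => [[((gX c : nat) == m) && P c k]]) = \sum_k [[P (cX N) k]].
Proof.
rewrite /S2 exchange_big; apply: eq_bigr => k _.
rewrite -(sum_pick_perm gX N (fun c => [[P c k]])); apply: eq_bigr => c _.
have -> : ((gX c : nat) == m) = (gX c == N) by [].
by case: (gX c == N); case: (P c k).
Qed.
Lemma cX2 (P : 'I_m.+1 -> 'I_m.+1 -> bool) :
  S2 (fun c k => [[((gX k : nat) == m) && P c k]]) = \sum_c [[P c (cX N)]].
Proof.
rewrite /S2; apply: eq_bigr => c _.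
rewrite -(sum_pick_perm gX N (fun k => [[P c k]])); apply: eq_bigr => k _.
have -> : ((gX k : nat) == m) = (gX k == N) by [].
by case: (gX k == N); case: (P c k).
Qed.

Lemma fin_pw (u al c' : nat) : (u <= m)%N -> (al <= m)%N -> (c' <= m)%N ->
  (al == m) = (c' == m) ->
  [[(u <= al)%N]] - [[(u < al)%N]] + [[(c'.+1 %% m.+1 < u)%N]] - [[(u < c'.+1 %% m.+1)%N]]
  - [[(c' < u)%N]] + [[(u <= c')%N]] - [[al == m]] - [[al == m]]
  = [[u == al]] - [[u == (c'.+1 %% m.+1)%N]].
Proof.
move=> hu ha hc e; rewrite (modS hc).
case: ifP => h; lia.
Qed.

Lemma delta :
  S2 (fun c k => [[((c : nat).+1 %% m.+1 < (k : nat).+1 %% m.+1)%N && ((gX c : nat).+1 %% m.+1 < (gX k : nat).+1 %% m.+1)%N]])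
  - S2 (fun c k => [[((c : nat).+1 %% m.+1 <= k)%N && ((gX c : nat).+1 %% m.+1 <= gO k)%N]])
  - S2 (fun c k => [[(c < (k : nat).+1 %% m.+1)%N && (gO c < (gX k : nat).+1 %% m.+1)%N]])
  = S2 (fun c k => [[(c < k)%N && (gX c < gX k)%N]]) - S2 (fun c k => [[(c < k)%N && (gX c < gO k)%N]])
    - S2 (fun c k => [[(c <= k)%N && (gO c <= gX k)%N]]).
Proof.
rewrite (eq_S2 P1) (eq_S2 P2) (eq_S2 P3) !S2D !S2N.
rewrite (cN1 (fun c k => (gX c < gX k)%N)) (cN2 (fun c k => (gX c < gX k)%N)).
rewrite (cX1 (fun c k => ((c : nat).+1 %% m.+1 < (k : nat).+1 %% m.+1)%N)).
rewrite (cX2 (fun c k => ((c : nat).+1 %% m.+1 < (k : nat).+1 %% m.+1)%N)).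
rewrite (cX1 (fun c k => (c < k)%N)) (cN1 (fun c k => (gX c < gO k)%N)).
rewrite (cN1 (fun c k => ((gX c : nat) == m))).
rewrite (cX2 (fun c k => (c <= k)%N)) (cN2 (fun c k => (gO c <= gX k)%N)).
rewrite (cN2 (fun c k => ((gX k : nat) == m))).
have r1 : \sum_k [[(gX N < gX k)%N]] = \sum_k [[(gX N < gO k)%N]].
  by rewrite (sum_inj (fun u => [[(gX N < u)%N]]) (@perm_inj _ gX)) (sum_inj (fun u => [[(gX N < u)%N]]) (@perm_inj _ gO)).
have r2 : \sum_c [[(gX c < gX N)%N]] = \sum_(u : 'I_m.+1) [[(u < gX N)%N]].
  exact: (sum_inj (fun u => [[(u < gX N)%N]]) (@perm_inj _ gX)).
have r3 : \sum_c [[(gO c <= gX N)%N]] = \sum_(u : 'I_m.+1) [[(u <= gX N)%N]].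
  exact: (sum_inj (fun u => [[(u <= gX N)%N]]) (@perm_inj _ gO)).
have r4 : \sum_(k : 'I_m.+1) [[((cX N).+1 %% m.+1 < k.+1 %% m.+1)%N]] = \sum_(u : 'I_m.+1) [[((cX N).+1 %% m.+1 < u)%N]].
  exact: (sum_inj (fun u : 'I_m.+1 => [[((cX N).+1 %% m.+1 < u)%N]]) (@ordS_inj _)).
have r5 : \sum_(c : 'I_m.+1) [[(c.+1 %% m.+1 < (cX N).+1 %% m.+1)%N]] = \sum_(u : 'I_m.+1) [[(u < (cX N).+1 %% m.+1)%N]].
  exact: (sum_inj (fun u : 'I_m.+1 => [[(u < (cX N).+1 %% m.+1)%N]]) (@ordS_inj _)).
have hfin : \sum_(u : 'I_m.+1) [[(u <= gX N)%N]] - \sum_(u : 'I_m.+1) [[(u < gX N)%N]]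
  + \sum_(u : 'I_m.+1) [[((cX N).+1 %% m.+1 < u)%N]] - \sum_(u : 'I_m.+1) [[(u < (cX N).+1 %% m.+1)%N]]
  - \sum_(k : 'I_m.+1) [[(cX N < k)%N]] + \sum_(c : 'I_m.+1) [[(c <= cX N)%N]] - \sum_(k : 'I_m.+1) [[(gX N : nat) == m]]
  - \sum_(c : 'I_m.+1) [[(gX N : nat) == m]] = 0.
  transitivity (\sum_(u : 'I_m.+1) ([[u == gX N]] - [[u == ordS (cX N)]])).
    repeat (rewrite -sumrB || rewrite -big_split); apply: eq_bigr => u _.
    apply: fin_pw; try by rewrite -ltnS ltn_ord.
    by have := eqX gX N N; rewrite /= eq_sym.
  by rewrite sumrB !sum_pick1 subrr.
rewrite r1 r2 r3 r4 r5.
move: hfin. set x1 := \sum_(_ < _) [[(_ < gX N)%N]]. set x2 := \sum_(_ < _) [[(((cX N).+1 %% m.+1) < _)%N]]. set x3 := \sum_(_ < _) [[(_ < ((cX N).+1 %% m.+1))%N]]. set x4 := \sum_(_ < _) [[(cX N < _)%N]]. set x5 := \sum_(_ < _) [[(_ <= cX N)%N]]. set x6 := \sum_(_ < _) [[(_ <= gX N)%N]]. set x7 := \sum_(_ < _) [[_ == m]]. set x8 := \sum_(_ < _) [[(gX N < gO _)%N]]. lia.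
Qed.
End Plus.

Lemma finish (z w : int) (d : nat) : z = - w - d%:Z ->
  ((z + 1)%:~R : rat) = - w%:~R - d%:R + 1.
Proof.
move=> ->; rewrite !rmorphD !rmorphN /= mulr1z.
by change (((d%:Z)%:~R : rat)) with (d%:R : rat).
Qed.

Unset Implicit Arguments.

Theorem lemma6p4 (n : nat) (gX gO : {perm 'I_n}) :
  knot_grid gX gO ->
  Mgr (Ocenters gO) (xplus gX) = - (writhe gX gO)%:~R - (down_cusps gX gO)%:R + 1
  /\ Mgr (Ocenters gO) (xminus gX) = - (writhe gX gO)%:~R - (up_cusps gX gO)%:R + 1.
Proof.
move=> _; case: n gX gO => [|m] gX gO.
  split; rewrite Mgr_eq; apply: finish;
  rewrite /Ocenters ?/xplus ?/xminus !Irel_map /S2 /writhe ?/down_cusps ?/up_cusps PoszD !card_sum !big_ord0;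
  by [].
split.
- rewrite Mgr_eq; apply: finish.
  rewrite /Ocenters /xplus !Irel_map.
  under [X in X - _ - _ + _]eq_S2 => c k do rewrite /= ltr_nat ltr_nat.
  under [X in _ - X - _ + _]eq_S2 => c k do rewrite /= lt_nat_half lt_nat_half.
  under [X in _ - _ - X + _]eq_S2 => c k do rewrite /= lt_half_nat lt_half_nat.
  under [X in _ + X]eq_S2 => c k do rewrite /= lt_half_half lt_half_half.
  rewrite delta.
  exact: xplus_unwr_int.
- rewrite Mgr_eq; apply: finish.
  rewrite /Ocenters /xminus !Irel_map.
  under [X in X - _ - _ + _]eq_S2 => c k do rewrite /= ltr_nat ltr_nat.
  under [X in _ - X - _ + _]eq_S2 => c k do rewrite /= lt_nat_half lt_nat_half.
  under [X in _ - _ - X + _]eq_S2 => c k do rewrite /= lt_half_nat lt_half_nat.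
  under [X in _ + X]eq_S2 => c k do rewrite /= lt_half_half lt_half_half.
  exact: xminus_int.
Qed.
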